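(* Let $k\ge 2$ be an integer. The class of finite simple graphs admitting a closed neighborhood balanced $k$-coloring is not hereditary; that is, there exist a graph $H$ admitting a closed neighborhood balanced $k$-coloring and an induced subgraph of $H$ that admits no closed neighborhood balanced $k$-coloring.
   Context: For a vertex $v$ of a graph $G$, $N[v]=\{v\}\cup\{u : uv\in E(G)\}$ is its closed neighborhood. For an integer $k\ge 2$, a closed neighborhood balanced $k$-coloring of $G$ is a map $c: V(G)\to\{1,2,\dots,k\}$ such that for every vertex $v$ the numbers $|\{u\in N[v] : c(u)=i\}|$, $i=1,\dots,k$, are all equal. A class of graphs is hereditary if it is closed under taking induced subgraphs. *)

(* Defs.v *)
From mathcomp Require Import all_boot.
Set Implicit Arguments. Unset Strict Implicit. Unset Printing Implicit Defensive.

Definition simple_graph (T : finType) (e : rel T) : Prop :=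
  symmetric e /\ irreflexive e.

Definition cnbhd (T : finType) (e : rel T) (S : {set T}) (v : T) : {set T} :=
  [set u in S | (u == v) || e v u].

(* c is a closed neighborhood balanced k-coloring of the subgraph induced by S
   (colors of vertices outside S are irrelevant). *)
Definition cnb_coloring (k : nat) (T : finType) (e : rel T) (S : {set T})
  (c : T -> 'I_k) : Prop :=
  forall v, v \in S -> forall i j : 'I_k,
    #|[set u in cnbhd e S v | c u == i]| = #|[set u in cnbhd e S v | c u == j]|.

Definition has_cnb_coloring (k : nat) (T : finType) (e : rel T) (S : {set T}) : Prop :=
  exists c : T -> 'I_k, cnb_coloring e S c.

(* Main.v *)
Require Import Defs.
From mathcomp Require Import all_boot.

Theorem corollary2p7 (k : nat) (hk : 2 <= k) :
  exists (T : finType) (e : rel T),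
    simple_graph e /\ has_cnb_coloring k e [set: T] /\
    exists S : {set T}, ~ has_cnb_coloring k e S.
Proof.
have h0 : 0 < k by apply: ltnW.
pose x0 := Ordinal h0.
pose x1 := Ordinal hk.
exists ('I_k)%type, (fun x y : 'I_k => x != y).
split; first by split; [move=> x y; rewrite eq_sym | move=> x; rewrite eqxx].
split.
  exists id => v _ i j.
  have E : forall i : 'I_k, [set u in cnbhd (fun x y : 'I_k => x != y) [set: 'I_k] v | id u == i] = [set i].
    move=> l; apply/setP => u; rewrite !inE /=.
    by case: (u =P v) => [->|/eqP]; rewrite ?eqxx //= eq_sym => ->.
  by rewrite !E !cards1.
exists [set x0] => [[c Hc]].
have E : forall i : 'I_k, [set u in cnbhd (fun x y : 'I_k => x != y) [set x0] x0 | c u == i] = if c x0 == i then [set x0] else set0.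
  move=> i; apply/setP => u; rewrite !inE.
  case: (u =P x0) => [->|] /=; first by case: (c x0 == i); rewrite inE ?eqxx.
  by move=> /eqP H; case: (c x0 == i); rewrite inE // (negbTE H).
pose j := if val (c x0) == 0 then x1 else x0.
have := Hc x0 (set11 x0) (c x0) j.
rewrite !E eqxx cards1.
have -> : (c x0 == j) = false.
  apply/negP => /eqP H2; move: (congr1 val H2); rewrite /j.
  case: eqP => H /= E0.
    by move: (etrans (esym H) E0).
  by apply: H.
move=> H0; have Z := cards0 'I_k.
by rewrite -H0 in Z.
Qed.
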